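(* Let $(G,Y)$ be a $C$-group and let $S(G,Y)$ be its factorization semigroup with product homomorphism $\alpha_G:S(G,Y)\to G$. Two elements $s_1,s_2\in S(G,Y)$ are equivalent if and only if $\alpha_G(s_1)=\alpha_G(s_2)$.
   Context: An equipped group is a pair $(G,O)$ where $G$ is a group and $O\subset G$ is a union of finitely many conjugacy classes of $G$ with $1\notin O$. A $C$-group is an equipped group $(G,Y)$ such that $G$ admits a presentation whose generators are the elements of $Y$ and all of whose defining relations have the form $z^{-1}yz=y'$ with $y,y',z\in Y$. The factorization semigroup $S(G,O)$ is the semigroup generated by symbols $x_g$, $g\in O$, subject to the relations $x_{g_1}x_{g_2}=x_{g_2}x_{g_2^{-1}g_1g_2}=x_{g_1g_2g_1^{-1}}x_{g_1}$ for all $g_1,g_2\in O$; the product homomorphism $\alpha_G:S(G,O)\to G$ is given by $x_g\mapsto g$. Two elements $s_1,s_2$ of a semigroup $S$ are called equivalent if there exist $s_3,s_4\in S$ with $s_3s_1s_4=s_3s_2s_4$. *)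

(* Defs.v *)
From Stdlib Require Import List.
Import ListNotations.

Record Grp := {
  carrier :> Type;
  gmul : carrier -> carrier -> carrier;
  ginv : carrier -> carrier;
  gone : carrier;
  gmulA : forall x y z, gmul x (gmul y z) = gmul (gmul x y) z;
  gmul1 : forall x, gmul gone x = x;
  gmulV : forall x, gmul (ginv x) x = gone
}.

Arguments gmul {g} _ _.
Arguments ginv {g} _.
Arguments gone {g}.

Definition is_hom {G H : Grp} (phi : G -> H) : Prop :=
  forall x y, phi (gmul x y) = gmul (phi x) (phi y).

Inductive gen {G : Grp} (Y : G -> Prop) : G -> Prop :=
| gen_one : gen Y gone
| gen_Y : forall y, Y y -> gen Y y
| gen_mul : forall x y, gen Y x -> gen Y y -> gen Y (gmul x y)
| gen_inv : forall x, gen Y x -> gen Y (ginv x).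

Definition equipped (G : Grp) (O : G -> Prop) : Prop :=
  (exists l : list G, forall x,
      O x <-> exists g h, In g l /\ x = gmul (ginv h) (gmul g h))
  /\ ~ O gone.

(* (G,Y) is a C-group: equipped, and G admits a presentation whose
   generators are the elements of Y and whose defining relations R are
   all of the form z^-1 y z = y' (y,y',z in Y).  "G = <Y | R>" is expressed
   by its universal property: Y generates G, the relations R hold in G, and
   every map of Y into a group H respecting R extends to a homomorphism. *)
Definition C_group (G : Grp) (Y : G -> Prop) : Prop :=
  equipped G Y /\
  exists R : G -> G -> G -> Prop,
    (forall y z y', R y z y' ->
        Y y /\ Y z /\ Y y' /\ gmul (ginv z) (gmul y z) = y') /\
    (forall x, gen Y x) /\
    (forall (H : Grp) (f : G -> H),
        (forall y z y', R y z y' -> gmul (ginv (f z)) (gmul (f y) (f z)) = f y') ->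
        exists phi : G -> H, is_hom phi /\ forall y, Y y -> phi y = f y).

(* Factorization semigroup S(G,O): its elements are represented by nonempty
   words x_{g_1} ... x_{g_n} (g_i in O), modulo the congruence fact_cong
   generated by x_{g1} x_{g2} = x_{g2} x_{g2^-1 g1 g2} = x_{g1 g2 g1^-1} x_{g1}. *)
Definition word_in {G : Grp} (O : G -> Prop) (w : list G) : Prop :=
  w <> [] /\ Forall O w.

Inductive fact_cong {G : Grp} (O : G -> Prop) : list G -> list G -> Prop :=
| fc_rel1 : forall u v g1 g2, O g1 -> O g2 ->
    fact_cong O (u ++ [g1; g2] ++ v)
                (u ++ [g2; gmul (ginv g2) (gmul g1 g2)] ++ v)
| fc_rel2 : forall u v g1 g2, O g1 -> O g2 ->
    fact_cong O (u ++ [g1; g2] ++ v)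
                (u ++ [gmul g1 (gmul g2 (ginv g1)); g1] ++ v)
| fc_refl : forall w, fact_cong O w w
| fc_sym : forall w1 w2, fact_cong O w1 w2 -> fact_cong O w2 w1
| fc_trans : forall w1 w2 w3,
    fact_cong O w1 w2 -> fact_cong O w2 w3 -> fact_cong O w1 w3.

Definition alpha {G : Grp} (w : list G) : G :=
  fold_right (fun g acc => gmul g acc) gone w.

Definition equivalent {G : Grp} (O : G -> Prop) (w1 w2 : list G) : Prop :=
  exists w3 w4, word_in O w3 /\ word_in O w4 /\
    fact_cong O (w3 ++ w1 ++ w4) (w3 ++ w2 ++ w4).

(* Main.v *)
Require Import Defs.
From Stdlib Require Import List.
From Stdlib Require Import ClassicalEpsilon FunctionalExtensionality PropExtensionality ProofIrrelevance.
Import ListNotations.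

Lemma g_mulV_r (G : Grp) (x : G) : gmul x (ginv x) = gone.
Proof.
  rewrite <- (gmul1 G (gmul x (ginv x))).
  rewrite <- (gmulV G (ginv x)) at 1.
  rewrite <- gmulA. rewrite (gmulA G (ginv x) x (ginv x)). rewrite gmulV, gmul1.
  apply gmulV.
Qed.

Lemma g_mul1_r (G : Grp) (x : G) : gmul x gone = x.
Proof. rewrite <- (gmulV G x), gmulA, g_mulV_r, gmul1. reflexivity. Qed.

Lemma g_cancel_l (G : Grp) (a x y : G) : gmul a x = gmul a y -> x = y.
Proof.
  intro H. rewrite <- (gmul1 G x), <- (gmul1 G y), <- (gmulV G a), <- !gmulA, H. reflexivity.
Qed.

Lemma g_cancel_r (G : Grp) (a x y : G) : gmul x a = gmul y a -> x = y.
Proof.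
  intro H. rewrite <- (g_mul1_r G x), <- (g_mul1_r G y), <- (g_mulV_r G a), !gmulA, H. reflexivity.
Qed.

Lemma g_inv_mul (G : Grp) (x y : G) : ginv (gmul x y) = gmul (ginv y) (ginv x).
Proof.
  apply (g_cancel_l G (gmul x y)). rewrite g_mulV_r.
  rewrite <- gmulA, (gmulA G y (ginv y)), g_mulV_r, gmul1, g_mulV_r. reflexivity.
Qed.

Lemma g_inv_one (G : Grp) : ginv (@gone G) = gone.
Proof. rewrite <- (gmul1 G (ginv gone)). apply g_mulV_r. Qed.

Lemma g_idem (G : Grp) (x : G) : gmul x x = x -> x = gone.
Proof. intro H. apply (g_cancel_l G x). rewrite H, g_mul1_r. reflexivity. Qed.

Definition conj {G : Grp} (h g : G) : G := gmul (ginv h) (gmul g h).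

Lemma conj_one (G : Grp) (g : G) : conj gone g = g.
Proof. unfold conj. rewrite g_inv_one, gmul1, g_mul1_r. reflexivity. Qed.

Lemma conj_of_one (G : Grp) (h : G) : conj h gone = gone.
Proof. unfold conj. rewrite gmul1, gmulV. reflexivity. Qed.

Lemma conj_comp (G : Grp) (k h g : G) : conj h (conj k g) = conj (gmul k h) g.
Proof. unfold conj. rewrite g_inv_mul, !gmulA. reflexivity. Qed.

Lemma conj_mul (G : Grp) (h a b : G) : conj h (gmul a b) = gmul (conj h a) (conj h b).
Proof.
  unfold conj. rewrite !gmulA. f_equal. rewrite <- !gmulA. f_equal. f_equal.
  rewrite (gmulA G h (ginv h)), g_mulV_r, gmul1. reflexivity.
Qed.

Lemma conj_inv (G : Grp) (h a : G) : conj h (ginv a) = ginv (conj h a).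
Proof.
  apply (g_cancel_l G (conj h a)). rewrite g_mulV_r, <- conj_mul, g_mulV_r, conj_of_one. reflexivity.
Qed.

Lemma conj_self (G : Grp) (z : G) : conj z z = z.
Proof. unfold conj. rewrite gmulA, gmulV, gmul1. reflexivity. Qed.

Lemma conj_inv_cancel (G : Grp) (h g : G) : conj h (conj (ginv h) g) = g.
Proof. rewrite conj_comp, gmulV, conj_one. reflexivity. Qed.

Definition cw {G : Grp} (h : G) (w : list G) : list G := map (conj h) w.

Lemma cw_one (G : Grp) (w : list G) : cw gone w = w.
Proof. unfold cw. induction w; simpl; [reflexivity|]. rewrite conj_one, IHw. reflexivity. Qed.

Lemma cw_comp (G : Grp) (k h : G) (w : list G) : cw h (cw k w) = cw (gmul k h) w.
Proof. unfold cw. rewrite map_map. apply map_ext. intro. apply conj_comp. Qed.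

Lemma cw_app (G : Grp) (h : G) (u v : list G) : cw h (u ++ v) = cw h u ++ cw h v.
Proof. apply map_app. Qed.

Lemma alpha_app (G : Grp) (u v : list G) : alpha (u ++ v) = gmul (alpha u) (alpha v).
Proof.
  induction u; simpl. rewrite gmul1; reflexivity. rewrite IHu, gmulA. reflexivity.
Qed.

Lemma alpha_cw (G : Grp) (h : G) (w : list G) : alpha (cw h w) = conj h (alpha w).
Proof.
  induction w; simpl. rewrite conj_of_one; reflexivity. rewrite IHw, conj_mul. reflexivity.
Qed.

Lemma conj_closed (G : Grp) (Y : G -> Prop) : equipped G Y ->
  forall h x, Y x -> Y (conj h x).
Proof.
  intros [[l Hl] _] h x Hx. apply Hl in Hx. destruct Hx as [g [h' [Hg ->]]].
  apply Hl. exists g, (gmul h' h). split; [exact Hg|].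
  fold (conj h' g). rewrite conj_comp. reflexivity.
Qed.

Lemma Forall_cw (G : Grp) (Y : G -> Prop) : equipped G Y ->
  forall h w, Forall Y w -> Forall Y (cw h w).
Proof.
  intros HE h w H. unfold cw. apply Forall_map. eapply Forall_impl; [|exact H].
  intros. apply conj_closed; auto.
Qed.

Lemma fc_ctx (G : Grp) (O : G -> Prop) (w1 w2 : list G) :
  fact_cong O w1 w2 -> forall u v, fact_cong O (u ++ w1 ++ v) (u ++ w2 ++ v).
Proof.
  induction 1; intros u' v'.
  - replace (u' ++ (u ++ [g1; g2] ++ v) ++ v') with ((u' ++ u) ++ [g1; g2] ++ (v ++ v'))
      by (rewrite <- !app_assoc; reflexivity).
    replace (u' ++ (u ++ [g2; gmul (ginv g2) (gmul g1 g2)] ++ v) ++ v')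
      with ((u' ++ u) ++ [g2; gmul (ginv g2) (gmul g1 g2)] ++ (v ++ v'))
      by (rewrite <- !app_assoc; reflexivity).
    apply fc_rel1; auto.
  - replace (u' ++ (u ++ [g1; g2] ++ v) ++ v') with ((u' ++ u) ++ [g1; g2] ++ (v ++ v'))
      by (rewrite <- !app_assoc; reflexivity).
    replace (u' ++ (u ++ [gmul g1 (gmul g2 (ginv g1)); g1] ++ v) ++ v')
      with ((u' ++ u) ++ [gmul g1 (gmul g2 (ginv g1)); g1] ++ (v ++ v'))
      by (rewrite <- !app_assoc; reflexivity).
    apply fc_rel2; auto.
  - apply fc_refl.
  - apply fc_sym; auto.
  - eapply fc_trans; eauto.
Qed.

Lemma fc_alpha (G : Grp) (O : G -> Prop) (w1 w2 : list G) :
  fact_cong O w1 w2 -> alpha w1 = alpha w2.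
Proof.
  induction 1; try congruence; rewrite !alpha_app; f_equal; simpl; rewrite !g_mul1_r; f_equal.
  - rewrite gmulA, g_mulV_r, gmul1. reflexivity.
  - rewrite <- !gmulA, gmulV, g_mul1_r. reflexivity.
Qed.

Lemma fc_cw (G : Grp) (Y : G -> Prop) (HE : equipped G Y) (h : G) (w1 w2 : list G) :
  fact_cong Y w1 w2 -> fact_cong Y (cw h w1) (cw h w2).
Proof.
  induction 1.
  - rewrite !cw_app. simpl.
    replace (conj h (gmul (ginv g2) (gmul g1 g2))) with
      (gmul (ginv (conj h g2)) (gmul (conj h g1) (conj h g2)))
      by (rewrite !conj_mul, conj_inv; reflexivity).
    apply fc_rel1; apply conj_closed; auto.
  - rewrite !cw_app. simpl.
    replace (conj h (gmul g1 (gmul g2 (ginv g1)))) with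
      (gmul (conj h g1) (gmul (conj h g2) (ginv (conj h g1))))
      by (rewrite !conj_mul, conj_inv; reflexivity).
    apply fc_rel2; apply conj_closed; auto.
  - apply fc_refl.
  - apply fc_sym; auto.
  - eapply fc_trans; eauto.
Qed.

Lemma fc_swap1 (G : Grp) (Y : G -> Prop) (HE : equipped G Y) (g : G) (b : list G) :
  Y g -> Forall Y b -> fact_cong Y ([g] ++ b) (b ++ [conj (alpha b) g]).
Proof.
  intros Hg Hb. revert g Hg. induction Hb as [|c b Hc Hb IH]; intros g Hg.
  - simpl. rewrite conj_one. apply fc_refl.
  - eapply fc_trans.
    + exact (fc_rel1 _ [] b g c Hg Hc).
    + simpl.
      pose proof (fc_ctx _ Y _ _ (IH (conj c g) (conj_closed _ _ HE c g Hg)) [c] []) as K.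
      rewrite !app_nil_r in K. simpl in K. rewrite conj_comp in K. exact K.
Qed.

Lemma fc_swap (G : Grp) (Y : G -> Prop) (HE : equipped G Y) (a b : list G) :
  Forall Y a -> Forall Y b -> fact_cong Y (a ++ b) (b ++ cw (alpha b) a).
Proof.
  intros Ha Hb. induction Ha as [|g a Hg Ha IH].
  - simpl. rewrite app_nil_r. apply fc_refl.
  - pose proof (fc_ctx _ Y _ _ IH [g] []) as K1. rewrite !app_nil_r in K1. simpl in K1.
    pose proof (fc_ctx _ Y _ _ (fc_swap1 G Y HE g b Hg Hb) [] (cw (alpha b) a)) as K2.
    simpl in K2. rewrite <- app_assoc in K2.
    eapply fc_trans; [exact K1|exact K2].
Qed.

Lemma fc_swapL (G : Grp) (Y : G -> Prop) (HE : equipped G Y) (a b : list G) :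
  Forall Y a -> Forall Y b -> fact_cong Y (cw (ginv (alpha a)) b ++ a) (a ++ b).
Proof.
  intros Ha Hb. eapply fc_trans.
  - apply fc_swap; auto. apply Forall_cw; auto.
  - rewrite cw_comp, gmulV, cw_one. apply fc_refl.
Qed.

Ltac lnorm := simpl; rewrite ?app_nil_r; repeat (rewrite <- app_assoc; simpl); rewrite ?app_nil_r; reflexivity.

Lemma fc_conv (G : Grp) (Y : G -> Prop) (w1 w2 w1' w2' : list G) :
  fact_cong Y w1 w2 -> w1 = w1' -> w2 = w2' -> fact_cong Y w1' w2'.
Proof. intros H -> ->. exact H. Qed.

Lemma word_in_app (G : Grp) (Y : G -> Prop) (p q : list G) :
  word_in Y p -> Forall Y q -> word_in Y (p ++ q).
Proof.
  intros [Hn Hp] Hq. split. destruct p; [congruence|discriminate]. apply Forall_app; auto.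
Qed.

Lemma word_in_app2 (G : Grp) (Y : G -> Prop) (p q : list G) :
  Forall Y p -> word_in Y q -> word_in Y (p ++ q).
Proof.
  intros Hp [Hn Hq]. split. destruct p; [simpl; auto|discriminate]. apply Forall_app; auto.
Qed.

Lemma fc_move (G : Grp) (Y : G -> Prop) (HE : equipped G Y) (p p' q q' t : list G) :
  Forall Y p -> Forall Y p' -> Forall Y q -> Forall Y q' ->
  fact_cong Y ((p' ++ p) ++ t ++ (q ++ q'))
    (cw (ginv (alpha p')) p ++ (p' ++ t ++ q') ++ cw (alpha q') q).
Proof.
  intros Fp Fp' Fq Fq'. eapply fc_trans.
  - apply (fc_ctx _ Y _ _ (fc_sym _ _ _ (fc_swapL G Y HE p' p Fp' Fp)) [] (t ++ (q ++ q'))).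
  - eapply fc_conv.
    + apply (fc_ctx _ Y _ _ (fc_swap G Y HE q q' Fq Fq') (cw (ginv (alpha p')) p ++ p' ++ t) []).
    + lnorm.
    + lnorm.
Qed.

Lemma eqv_of_fc (G : Grp) (Y : G -> Prop) (y0 : G) (Hy0 : Y y0) (s t : list G) :
  fact_cong Y s t -> equivalent Y s t.
Proof.
  intro H. exists [y0], [y0].
  assert (W : word_in Y [y0]) by (split; [discriminate|constructor; auto]).
  split; [exact W|]. split; [exact W|]. apply fc_ctx. exact H.
Qed.

Lemma eqv_refl (G : Grp) (Y : G -> Prop) (y0 : G) (Hy0 : Y y0) (s : list G) :
  equivalent Y s s.
Proof. apply (eqv_of_fc G Y y0 Hy0). apply fc_refl. Qed.

Lemma eqv_sym (G : Grp) (Y : G -> Prop) (s t : list G) :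
  equivalent Y s t -> equivalent Y t s.
Proof.
  intros [p [q [Hp [Hq H]]]]. exists p, q. split; auto. split; auto. apply fc_sym; auto.
Qed.

Lemma eqv_trans (G : Grp) (Y : G -> Prop) (HE : equipped G Y) (s t r : list G) :
  equivalent Y s t -> equivalent Y t r -> equivalent Y s r.
Proof.
  intros [p [q [Hp [Hq H1]]]] [p' [q' [Hp' [Hq' H2]]]].
  exists (p' ++ p), (q ++ q').
  split. apply word_in_app; auto. apply Hp.
  split. apply word_in_app; auto. apply Hq'.
  destruct Hp as [_ Fp], Hq as [_ Fq], Hp' as [_ Fp'], Hq' as [_ Fq'].
  apply fc_trans with ((p' ++ p) ++ t ++ (q ++ q')).
  - eapply fc_conv. apply (fc_ctx _ Y _ _ H1 p' q'). lnorm. lnorm.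
  - eapply fc_trans. apply fc_move; auto.
    eapply fc_trans. apply fc_ctx. exact H2.
    apply fc_sym. apply fc_move; auto.
Qed.

Lemma eqv_app_l (G : Grp) (Y : G -> Prop) (HE : equipped G Y) (u s t : list G) :
  Forall Y u -> equivalent Y s t -> equivalent Y (u ++ s) (u ++ t).
Proof.
  intros Fu [p [q [Hp [Hq H]]]]. exists p, q. split; auto. split; auto.
  destruct Hp as [_ Fp].
  assert (K : forall x, fact_cong Y (p ++ (u ++ x) ++ q) (cw (ginv (alpha p)) u ++ (p ++ x ++ q))).
  { intro x. eapply fc_conv.
    apply (fc_ctx _ Y _ _ (fc_sym _ _ _ (fc_swapL G Y HE p u Fp Fu)) [] (x ++ q)). lnorm. lnorm. }
  pose proof (fc_ctx _ Y _ _ H (cw (ginv (alpha p)) u) []) as H'. rewrite !app_nil_r in H'.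
  eapply fc_trans. apply K. eapply fc_trans. exact H'. apply fc_sym. apply K.
Qed.

Lemma eqv_app_r (G : Grp) (Y : G -> Prop) (HE : equipped G Y) (u s t : list G) :
  Forall Y u -> equivalent Y s t -> equivalent Y (s ++ u) (t ++ u).
Proof.
  intros Fu [p [q [Hp [Hq H]]]]. exists p, q. split; auto. split; auto.
  destruct Hq as [_ Fq].
  assert (K : forall x, fact_cong Y (p ++ (x ++ u) ++ q) ((p ++ x ++ q) ++ cw (alpha q) u)).
  { intro x. eapply fc_conv.
    apply (fc_ctx _ Y _ _ (fc_swap G Y HE u q Fu Fq) (p ++ x) []). lnorm. lnorm. }
  pose proof (fc_ctx _ Y _ _ H [] (cw (alpha q) u)) as H'. simpl in H'.
  eapply fc_trans. apply K. eapply fc_trans. exact H'. apply fc_sym. apply K.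
Qed.

Lemma eqv_cancel_l (G : Grp) (Y : G -> Prop) (u s t : list G) :
  Forall Y u -> equivalent Y (u ++ s) (u ++ t) -> equivalent Y s t.
Proof.
  intros Fu [p [q [Hp [Hq H]]]]. exists (p ++ u), q. split. apply word_in_app; auto.
  split; auto. eapply fc_conv. exact H. lnorm. lnorm.
Qed.

Lemma eqv_cancel_r (G : Grp) (Y : G -> Prop) (u s t : list G) :
  Forall Y u -> equivalent Y (s ++ u) (t ++ u) -> equivalent Y s t.
Proof.
  intros Fu [p [q [Hp [Hq H]]]]. exists p, (u ++ q). split; auto.
  split. apply word_in_app2; auto. eapply fc_conv. exact H. lnorm. lnorm.
Qed.

Lemma eqv_cw (G : Grp) (Y : G -> Prop) (HE : equipped G Y) (h : G) (s t : list G) :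
  equivalent Y s t -> equivalent Y (cw h s) (cw h t).
Proof.
  intros [p [q [[Hp Fp] [[Hq Fq] H]]]]. exists (cw h p), (cw h q).
  split. split. destruct p; [congruence|discriminate]. apply Forall_cw; auto.
  split. split. destruct q; [congruence|discriminate]. apply Forall_cw; auto.
  apply (fc_cw G Y HE h) in H. rewrite !cw_app in H. exact H.
Qed.

Lemma eqv_alpha (G : Grp) (Y : G -> Prop) (s t : list G) :
  equivalent Y s t -> alpha s = alpha t.
Proof.
  intros [p [q [_ [_ H]]]]. apply fc_alpha in H. rewrite !alpha_app in H.
  apply g_cancel_l in H. apply g_cancel_r in H. exact H.
Qed.

Lemma eqv_comm (G : Grp) (Y : G -> Prop) (HE : equipped G Y) (y0 : G) (Hy0 : Y y0)
  (a b : list G) : Forall Y a -> Forall Y b ->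
  equivalent Y (a ++ b) (b ++ cw (alpha b) a).
Proof. intros. apply (eqv_of_fc G Y y0 Hy0). apply fc_swap; auto. Qed.

Lemma eqv_K (G : Grp) (Y : G -> Prop) (HE : equipped G Y) (y0 : G) (Hy0 : Y y0)
  (b : list G) : Forall Y b -> equivalent Y b (cw (alpha b) b).
Proof.
  intro Fb. apply (eqv_cancel_l G Y b); auto. apply eqv_comm with y0; auto.
Qed.

Lemma sig_eq_irr (U : Type) (P : U -> Prop) (x y : U) (p : P x) (q : P y) :
  x = y -> exist P x p = exist P y q.
Proof. intros ->. f_equal. apply proof_irrelevance. Qed.

Record QSpec (A : Type) (E : A -> A -> Prop) (m : A -> A -> A) (i : A -> A) (e : A) : Prop := {
  q_refl : forall x, E x x;
  q_sym : forall x y, E x y -> E y x;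
  q_trans : forall x y z, E x y -> E y z -> E x z;
  q_mc : forall x x' y y', E x x' -> E y y' -> E (m x y) (m x' y');
  q_ic : forall x x', E x x' -> E (i x) (i x');
  q_assoc : forall x y z, E (m x (m y z)) (m (m x y) z);
  q_idl : forall x, E (m e x) x;
  q_invl : forall x, E (m (i x) x) e
}.

Definition Qt (A : Type) (E : A -> A -> Prop) := {P : A -> Prop | exists x, P = E x}.
Definition cls {A : Type} {E : A -> A -> Prop} (x : A) : Qt A E :=
  exist _ (E x) (ex_intro _ x eq_refl).
Definition rep {A : Type} {E : A -> A -> Prop} (q : Qt A E) : A :=
  proj1_sig (constructive_indefinite_description _ (proj2_sig q)).

Lemma cls_rep (A : Type) (E : A -> A -> Prop) (q : Qt A E) : cls (rep q) = q.
Proof.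
  destruct q as [P HP]. unfold rep. simpl.
  destruct (constructive_indefinite_description _ HP) as [x Hx]. simpl.
  unfold cls. apply sig_eq_irr. symmetry. exact Hx.
Qed.

Lemma cls_eq (A : Type) (E : A -> A -> Prop) (Hs : forall x y, E x y -> E y x)
  (Ht : forall x y z, E x y -> E y z -> E x z) (x y : A) :
  E x y -> @cls A E x = cls y.
Proof.
  intro H. unfold cls. apply sig_eq_irr. apply functional_extensionality. intro z.
  apply propositional_extensionality. split; intro K; eauto.
Qed.

Lemma cls_inj (A : Type) (E : A -> A -> Prop) (Hr : forall x, E x x) (x y : A) :
  @cls A E x = cls y -> E x y.
Proof.
  intro H. apply (f_equal (@proj1_sig _ _)) in H. simpl in H. rewrite H. apply Hr.
Qed.

Lemma rep_cls (A : Type) (E : A -> A -> Prop) (Hr : forall x, E x x) (x : A) :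
  E (rep (@cls A E x)) x.
Proof. apply cls_inj; auto. apply cls_rep. Qed.

Definition qmul {A : Type} {E : A -> A -> Prop} (m : A -> A -> A) (q1 q2 : Qt A E) : Qt A E :=
  cls (m (rep q1) (rep q2)).
Definition qinv {A : Type} {E : A -> A -> Prop} (i : A -> A) (q : Qt A E) : Qt A E :=
  cls (i (rep q)).

Lemma qmul_cls A E m i e (S : QSpec A E m i e) (x y : A) :
  qmul m (@cls A E x) (cls y) = cls (m x y).
Proof.
  unfold qmul. apply cls_eq. apply (q_sym _ _ _ _ _ S). apply (q_trans _ _ _ _ _ S).
  apply (q_mc _ _ _ _ _ S); apply rep_cls; apply (q_refl _ _ _ _ _ S).
Qed.

Lemma qinv_cls A E m i e (S : QSpec A E m i e) (x : A) :
  qinv i (@cls A E x) = cls (i x).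
Proof.
  unfold qinv. apply cls_eq. apply (q_sym _ _ _ _ _ S). apply (q_trans _ _ _ _ _ S).
  apply (q_ic _ _ _ _ _ S); apply rep_cls; apply (q_refl _ _ _ _ _ S).
Qed.

Lemma QG_assoc A E m i e (S : QSpec A E m i e) (x y z : Qt A E) :
  qmul m x (qmul m y z) = qmul m (qmul m x y) z.
Proof.
  rewrite <- (cls_rep A E x), <- (cls_rep A E y), <- (cls_rep A E z).
  rewrite !(qmul_cls A E m i e S). apply cls_eq.
  apply (q_sym _ _ _ _ _ S). apply (q_trans _ _ _ _ _ S). apply (q_assoc _ _ _ _ _ S).
Qed.

Lemma QG_idl A E m i e (S : QSpec A E m i e) (x : Qt A E) :
  qmul m (cls e) x = x.
Proof.
  rewrite <- (cls_rep A E x). rewrite (qmul_cls A E m i e S). apply cls_eq.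
  apply (q_sym _ _ _ _ _ S). apply (q_trans _ _ _ _ _ S). apply (q_idl _ _ _ _ _ S).
Qed.

Lemma QG_invl A E m i e (S : QSpec A E m i e) (x : Qt A E) :
  qmul m (qinv i x) x = cls e.
Proof.
  rewrite <- (cls_rep A E x). rewrite (qinv_cls A E m i e S), (qmul_cls A E m i e S).
  apply cls_eq.
  apply (q_sym _ _ _ _ _ S). apply (q_trans _ _ _ _ _ S). apply (q_invl _ _ _ _ _ S).
Qed.

Definition QGrp A E m i e (S : QSpec A E m i e) : Grp :=
  {| carrier := Qt A E; gmul := qmul m; ginv := qinv i; gone := cls e;
     gmulA := QG_assoc A E m i e S; gmul1 := QG_idl A E m i e S;
     gmulV := QG_invl A E m i e S |}.

Definition valid {G : Grp} (Y : G -> Prop) (x : list G * list G) : Prop :=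
  Forall Y (fst x) /\ Forall Y (snd x).
Definition mulp {G : Grp} (x y : list G * list G) : list G * list G :=
  (fst x ++ cw (alpha (snd x)) (fst y), snd y ++ snd x).
Definition invp {G : Grp} (x : list G * list G) : list G * list G := (snd x, fst x).
Definition Ere {G : Grp} (Y : G -> Prop) (x y : list G * list G) : Prop :=
  exists u v, Forall Y u /\ Forall Y v /\ equivalent Y (fst x ++ u) (fst y ++ v) /\
    equivalent Y (snd x ++ u) (snd y ++ v).

Lemma eqv_conv (G : Grp) (Y : G -> Prop) (s t s' t' : list G) :
  equivalent Y s t -> s = s' -> t = t' -> equivalent Y s' t'.
Proof. intros H -> ->. exact H. Qed.

Lemma valid_mul (G : Grp) (Y : G -> Prop) (HE : equipped G Y) (x y : list G * list G) :
  valid Y x -> valid Y y -> valid Y (mulp x y).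
Proof.
  intros [] []. split; simpl; apply Forall_app; split; auto. apply Forall_cw; auto.
Qed.

Lemma valid_inv (G : Grp) (Y : G -> Prop) (x : list G * list G) :
  valid Y x -> valid Y (invp x).
Proof. intros []; split; auto. Qed.

Lemma valid_one (G : Grp) (Y : G -> Prop) : valid Y ([], []).
Proof. split; constructor. Qed.

Lemma Ere_eq (G : Grp) (Y : G -> Prop) (y0 : G) (Hy0 : Y y0) (x y : list G * list G) :
  x = y -> Ere Y x y.
Proof.
  intros ->. exists [], []. repeat split; try constructor; apply (eqv_refl G Y y0 Hy0).
Qed.

Lemma Ere_sym (G : Grp) (Y : G -> Prop) (x y : list G * list G) : Ere Y x y -> Ere Y y x.
Proof.
  intros [u [v [Fu [Fv [H1 H2]]]]]. exists v, u. repeat split; auto; apply eqv_sym; auto.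
Qed.

Lemma chain (G : Grp) (Y : G -> Prop) (HE : equipped G Y) (y0 : G) (Hy0 : Y y0)
  (a c e u v u' v' : list G) : Forall Y c -> Forall Y u -> Forall Y v -> Forall Y u' -> Forall Y v' ->
  equivalent Y (a ++ u) (c ++ v) -> equivalent Y (c ++ u') (e ++ v') ->
  equivalent Y (a ++ (u ++ u')) (e ++ (v' ++ cw (alpha u') v)).
Proof.
  intros Fc Fu Fv Fu' Fv' H1 H2.
  eapply eqv_trans; [exact HE| |].
  { eapply eqv_conv. apply (eqv_app_r G Y HE u'); [exact Fu'| exact H1]. lnorm. reflexivity. }
  eapply eqv_trans; [exact HE| |].
  { apply (eqv_app_r G Y HE u'); [exact Fu'|]. apply eqv_refl with y0; auto. }
  eapply eqv_trans; [exact HE| |].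
  { eapply eqv_conv. apply (eqv_app_l G Y HE c); [exact Fc|].
    apply (eqv_comm G Y HE y0 Hy0 v u' Fv Fu'). lnorm. reflexivity. }
  eapply eqv_conv. apply (eqv_app_r G Y HE (cw (alpha u') v)); [apply Forall_cw; auto| exact H2].
  lnorm. lnorm.
Qed.

Lemma Ere_trans (G : Grp) (Y : G -> Prop) (HE : equipped G Y) (y0 : G) (Hy0 : Y y0)
  (x y z : list G * list G) : valid Y y -> Ere Y x y -> Ere Y y z -> Ere Y x z.
Proof.
  intros [Fc Fd] [u [v [Fu [Fv [H1 H2]]]]] [u' [v' [Fu' [Fv' [H3 H4]]]]].
  exists (u ++ u'), (v' ++ cw (alpha u') v).
  split. apply Forall_app; auto. split. apply Forall_app; split; auto. apply Forall_cw; auto.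
  split; [eapply (chain G Y HE y0 Hy0 _ (fst y))|eapply (chain G Y HE y0 Hy0 _ (snd y))]; eauto.
Qed.

Lemma Ere_mc_l (G : Grp) (Y : G -> Prop) (HE : equipped G Y) (y0 : G) (Hy0 : Y y0)
  (x x' y : list G * list G) : valid Y x -> valid Y x' -> valid Y y ->
  Ere Y x x' -> Ere Y (mulp x y) (mulp x' y).
Proof.
  destruct x as [a b], x' as [a' b'], y as [c d].
  intros [Fa Fb] [Fa' Fb'] [Fc Fd] [u [v [Fu [Fv [H1 H2]]]]]. simpl in *.
  exists u, v. repeat split; auto; simpl.
  - assert (L : forall a b u, Forall Y a -> Forall Y b -> Forall Y u ->
      equivalent Y ((a ++ cw (alpha b) c) ++ u) ((a ++ u) ++ cw (alpha (b ++ u)) c)).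
    { intros a0 b0 u0 Fa0 Fb0 Fu0. eapply eqv_conv.
      apply (eqv_app_l G Y HE a0); [exact Fa0|].
      apply (eqv_comm G Y HE y0 Hy0 (cw (alpha b0) c) u0); [apply Forall_cw; auto|exact Fu0].
      lnorm. rewrite cw_comp, alpha_app. lnorm. }
    eapply eqv_trans; [exact HE|apply L; auto|].
    eapply eqv_trans; [exact HE| apply (eqv_app_r G Y HE); [apply Forall_cw; auto|exact H1]|].
    rewrite (eqv_alpha G Y _ _ H2). apply eqv_sym. apply L; auto.
  - eapply eqv_conv. apply (eqv_app_l G Y HE d); [exact Fd|exact H2]. lnorm. lnorm.
Qed.

Lemma Ere_mc_r (G : Grp) (Y : G -> Prop) (HE : equipped G Y) (y0 : G) (Hy0 : Y y0)
  (x y y' : list G * list G) : valid Y x -> valid Y y -> valid Y y' ->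
  Ere Y y y' -> Ere Y (mulp x y) (mulp x y').
Proof.
  destruct x as [a b], y as [c d], y' as [c' d'].
  intros [Fa Fb] [Fc Fd] [Fc' Fd'] [u [v [Fu [Fv [H1 H2]]]]]. simpl in *.
  exists (cw (alpha b) u), (cw (alpha b) v).
  split. apply Forall_cw; auto. split. apply Forall_cw; auto. split; simpl.
  - eapply eqv_conv. apply (eqv_app_l G Y HE a); [exact Fa|]. apply (eqv_cw G Y HE (alpha b)).
    exact H1. rewrite cw_app; lnorm. rewrite cw_app; lnorm.
  - assert (M : forall d u, Forall Y d -> Forall Y u ->
       equivalent Y ((d ++ b) ++ cw (alpha b) u) ((d ++ u) ++ b)).
    { intros d0 u0 Fd0 Fu0. eapply eqv_conv. apply (eqv_app_l G Y HE d0); [exact Fd0|].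
      apply eqv_sym. apply (eqv_comm G Y HE y0 Hy0 u0 b); auto. lnorm. lnorm. }
    eapply eqv_trans; [exact HE|apply M; auto|].
    eapply eqv_trans; [exact HE|apply (eqv_app_r G Y HE b); [exact Fb|exact H2]|].
    apply eqv_sym. apply M; auto.
Qed.

Lemma mulp_assoc (G : Grp) (x y z : list G * list G) :
  mulp x (mulp y z) = mulp (mulp x y) z.
Proof.
  destruct x as [a b], y as [c d], z as [e f]. unfold mulp; simpl.
  rewrite cw_app, cw_comp, alpha_app, !app_assoc. reflexivity.
Qed.

Lemma mulp_one (G : Grp) (x : list G * list G) : mulp ([], []) x = x.
Proof. destruct x as [a b]. unfold mulp; simpl. rewrite cw_one, app_nil_r. reflexivity. Qed.

Lemma mulp_invl (G : Grp) (Y : G -> Prop) (HE : equipped G Y) (y0 : G) (Hy0 : Y y0)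
  (x : list G * list G) : valid Y x -> Ere Y (mulp (invp x) x) ([], []).
Proof.
  destruct x as [a b]. intros [Fa Fb]. simpl in *. exists [], (b ++ a).
  repeat split; try constructor; unfold mulp; simpl.
  - apply Forall_app; auto.
  - rewrite app_nil_r. apply (eqv_app_l G Y HE b _ _ Fb). apply eqv_sym.
    apply (eqv_K G Y HE y0 Hy0 a Fa).
  - rewrite app_nil_r. apply eqv_refl with y0; auto.
Qed.

Definition FA (G : Grp) (Y : G -> Prop) := {x : list G * list G | valid Y x}.
Definition fmul (G : Grp) (Y : G -> Prop) (HE : equipped G Y) (x y : FA G Y) : FA G Y :=
  exist _ (mulp (proj1_sig x) (proj1_sig y)) (valid_mul G Y HE _ _ (proj2_sig x) (proj2_sig y)).
Definition finv (G : Grp) (Y : G -> Prop) (x : FA G Y) : FA G Y :=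
  exist _ (invp (proj1_sig x)) (valid_inv G Y _ (proj2_sig x)).
Definition fone (G : Grp) (Y : G -> Prop) : FA G Y := exist _ ([], []) (valid_one G Y).
Definition FE (G : Grp) (Y : G -> Prop) (x y : FA G Y) : Prop := Ere Y (proj1_sig x) (proj1_sig y).

Lemma F_spec (G : Grp) (Y : G -> Prop) (HE : equipped G Y) (y0 : G) (Hy0 : Y y0) :
  QSpec (FA G Y) (FE G Y) (fmul G Y HE) (finv G Y) (fone G Y).
Proof.
  constructor; unfold FE, fmul, finv, fone; simpl.
  - intros. apply (Ere_eq G Y y0 Hy0); auto.
  - intros. apply Ere_sym; auto.
  - intros x y z. apply (Ere_trans G Y HE y0 Hy0). exact (proj2_sig y).
  - intros x x' y y' H1 H2. apply (Ere_trans G Y HE y0 Hy0 _ (mulp (proj1_sig x') (proj1_sig y))).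
    apply valid_mul; auto; apply proj2_sig.
    apply (Ere_mc_l G Y HE y0 Hy0); auto; apply proj2_sig.
    apply (Ere_mc_r G Y HE y0 Hy0); auto; apply proj2_sig.
  - intros x x' [u [v [Fu [Fv [H1 H2]]]]]. exists u, v. repeat split; auto.
  - intros. apply (Ere_eq G Y y0 Hy0); auto. apply mulp_assoc.
  - intros. apply (Ere_eq G Y y0 Hy0); auto. apply mulp_one.
  - intros x. apply (mulp_invl G Y HE y0 Hy0). apply proj2_sig.
Qed.

Definition sgl (G : Grp) (Y : G -> Prop) (g : G) (h : Y g) : FA G Y :=
  exist _ ([g], []) (Logic.conj (Forall_cons _ h (Forall_nil _)) (Forall_nil _)).

Definition fmap (G : Grp) (Y : G -> Prop) (g : G) : Qt (FA G Y) (FE G Y) :=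
  match excluded_middle_informative (Y g) with
  | left h => cls (sgl G Y g h)
  | right _ => cls (fone G Y)
  end.

Lemma cls_pf (G : Grp) (Y : G -> Prop) (x : list G * list G) (p q : valid Y x) :
  @cls _ (FE G Y) (exist _ x p) = cls (exist _ x q).
Proof. f_equal. apply sig_eq_irr. reflexivity. Qed.

Lemma fmap_Y (G : Grp) (Y : G -> Prop) (g : G) (h : Y g) : fmap G Y g = cls (sgl G Y g h).
Proof.
  unfold fmap. destruct (excluded_middle_informative (Y g)) as [h'|n]; [|contradiction].
  apply cls_pf.
Qed.

Lemma dir2 (G : Grp) (Y : G -> Prop) (HC : C_group G Y) (y0 : G) (Hy0 : Y y0)
  (s1 s2 : list G) : Forall Y s1 -> Forall Y s2 -> alpha s1 = alpha s2 -> equivalent Y s1 s2.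
Proof.
  intros F1 F2 Heq.
  destruct HC as [HE [R [HR [_ Huniv]]]].
  pose (S := F_spec G Y HE y0 Hy0).
  pose (Hg := QGrp _ _ _ _ _ S).
  destruct (Huniv Hg (fmap G Y)) as [phi [Hphi Hphy]].
  - intros y z y' Hr. destruct (HR y z y' Hr) as [Hy [Hz [Hy' Hc]]].
    change (qmul (fmul G Y HE) (qinv (finv G Y) (fmap G Y z))
              (qmul (fmul G Y HE) (fmap G Y y) (fmap G Y z)) = fmap G Y y').
    rewrite (fmap_Y G Y y Hy), (fmap_Y G Y z Hz), (fmap_Y G Y y' Hy').
    rewrite !(qmul_cls _ _ _ _ _ S), (qinv_cls _ _ _ _ _ S), (qmul_cls _ _ _ _ _ S).
    apply cls_eq. apply (q_sym _ _ _ _ _ S). apply (q_trans _ _ _ _ _ S).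
    unfold FE; simpl. exists [], [z]. split; [constructor|]. split; [constructor; auto|].
    split.
    + eapply eqv_conv. apply (eqv_refl G Y y0 Hy0 [y'; z]).
      * simpl. unfold mulp; simpl. rewrite !g_mul1_r, conj_one, conj_self.
        unfold conj. rewrite Hc. reflexivity.
      * reflexivity.
    + apply (eqv_refl G Y y0 Hy0).
  - assert (Hone : phi gone = (@gone Hg)).
    { apply g_idem. rewrite <- Hphi, gmul1. reflexivity. }
    assert (Hs : forall s (p : valid Y (s, [])), Forall Y s ->
               phi (alpha s) = @cls _ (FE G Y) (exist _ (s, []) p)).
    { induction s as [|g s IH]; intros p Fs.
      - simpl. rewrite Hone. simpl. unfold fone. apply cls_pf.
      - inversion Fs as [|? ? Hgy Fs']; subst.
        assert (ps : valid Y (s, [])) by (split; [exact Fs'|constructor]).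
        simpl. rewrite Hphi, (IH ps Fs'), Hphy by exact Hgy. rewrite (fmap_Y G Y g Hgy).
        change (qmul (fmul G Y HE) (cls (sgl G Y g Hgy)) (cls (exist _ (s, []) ps)) =
                @cls _ (FE G Y) (exist _ (g :: s, []) p)).
        rewrite (qmul_cls _ _ _ _ _ S). f_equal. apply sig_eq_irr.
        unfold mulp; simpl. rewrite cw_one. reflexivity. }
    assert (p1 : valid Y (s1, [])) by (split; [exact F1|constructor]).
    assert (p2 : valid Y (s2, [])) by (split; [exact F2|constructor]).
    pose proof (Hs s1 p1 F1) as E1. pose proof (Hs s2 p2 F2) as E2.
    rewrite Heq, E2 in E1. apply cls_inj in E1; [|apply (q_refl _ _ _ _ _ S)].
    destruct E1 as [u [v [Fu [Fv [K1 K2]]]]]. simpl in K1, K2.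
    apply (eqv_cancel_r G Y v); [exact Fv|].
    eapply eqv_trans; [exact HE|apply eqv_sym; exact K1|].
    apply (eqv_app_l G Y HE s2 _ _ F2). exact K2.
Qed.

Theorem theorem3p4 (G : Grp) (Y : G -> Prop) (HC : C_group G Y)
  (s1 s2 : list G) (H1 : word_in Y s1) (H2 : word_in Y s2) :
  equivalent Y s1 s2 <-> alpha s1 = alpha s2.
Proof.
  split.
  - apply eqv_alpha.
  - destruct H1 as [N1 F1], H2 as [_ F2]. destruct s1 as [|y0 s1']; [congruence|].
    inversion F1; subst. apply (dir2 G Y HC y0); auto.
Qed.
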